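(* Let $\mathcal{P}=(\{\mathcal{E}_k:k\in K\},\{M_0,M_1\})$ be a concurrent quantum program on a Hilbert space $\mathcal{H}$ of finite dimension $d$, and let $\rho_0$ be an initial density operator. Then $$\mathcal{H}_{URR}=\operatorname{supp}\Big(\sum_{i=d}^{2d-1}\mathcal{F}^i(\rho_0)\Big),\qquad \mathcal{F}=\sum_{k\in K}\mathcal{F}_k.$$
   Context: $\mathcal{H}$ is a complex Hilbert space of finite dimension $d\ge 1$. A super-operator on $\mathcal{H}$ is a completely positive linear map on operators on $\mathcal{H}$ that does not increase trace of positive operators; trace-preserving if it preserves trace. $\operatorname{supp}(\rho)$ for positive semidefinite $\rho$ is the span of eigenvectors with nonzero eigenvalues. A concurrent quantum program is a pair $\mathcal{P}=(\{\mathcal{E}_k:k\in K\},\{M_0,M_1\})$ with $K=\{1,\dots,m\}$, each $\mathcal{E}_k$ a trace-preserving super-operator on $\mathcal{H}$, and $M_0^\dagger M_0+M_1^\dagger M_1=I$. Define $\mathcal{F}_k(\rho)=\mathcal{E}_k(M_1\rho M_1^\dagger)$; for a finite string $f=s_1\cdots s_n$ over $K$ (length $|f|=n$), $\mathcal{F}_f=\mathcal{F}_{s_n}\circ\cdots\circ\mathcal{F}_{s_1}$. $\mathcal{F}^i$ is the $i$-fold composition. The uniformly repeatedly reachable space is $\mathcal{H}_{URR}=\bigcap_{n\ge0}\bigvee\{\operatorname{supp}\mathcal{F}_f(\rho_0): f\in K^*,\ |f|\ge n\}$, where $\bigvee$ is the span of the union of subspaces. *)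

(* Defs.v *)
(* The Hilbert space H of dimension d is C^d, vectors are
   column vectors 'cV[C]_d, operators are 'M[C]_d, where C is an arbitrary
   numClosedFieldType (algebraically closed field with conjugation and the
   induced partial order; the complex numbers are such a field). *)
From HB Require Import structures.
From mathcomp Require Import all_boot all_order all_algebra.
Set Implicit Arguments. Unset Strict Implicit. Unset Printing Implicit Defensive.
Import Order.TTheory GRing.Theory Num.Theory.
Local Open Scope ring_scope.

Section QDefs.
Variable C : numClosedFieldType.

Definition adj (m n : nat) (A : 'M[C]_(m, n)) : 'M[C]_(n, m) :=
  (map_mx Num.conj A)^T.

Definition psd (d : nat) (A : 'M[C]_d) : Prop :=
  forall u : 'cV[C]_d, 0 <= (adj u *m A *m u) 0 0.

Definition density (d : nat) (rho : 'M[C]_d) : Prop :=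
  psd rho /\ \tr rho = 1.

(* positivity of an n x n block operator on C^n (x) C^d, given by its blocks *)
Definition block_psd (d n : nat) (B : 'I_n -> 'I_n -> 'M[C]_d) : Prop :=
  forall v : 'I_n -> 'cV[C]_d,
    0 <= \sum_(i < n) \sum_(j < n) (adj (v i) *m B i j *m v j) 0 0.

Definition linear_map (d : nat) (E : 'M[C]_d -> 'M[C]_d) : Prop :=
  forall (a : C) (A B : 'M[C]_d), E (a *: A + B) = a *: E A + E B.

(* complete positivity: id_n (x) E is positive for every n *)
Definition completely_positive (d : nat) (E : 'M[C]_d -> 'M[C]_d) : Prop :=
  forall (n : nat) (B : 'I_n -> 'I_n -> 'M[C]_d),
    block_psd B -> block_psd (fun i j => E (B i j)).

Definition superop (d : nat) (E : 'M[C]_d -> 'M[C]_d) : Prop :=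
  [/\ linear_map E, completely_positive E &
      forall A : 'M[C]_d, psd A -> \tr (E A) <= \tr A].

Definition trace_preserving (d : nat) (E : 'M[C]_d -> 'M[C]_d) : Prop :=
  forall A : 'M[C]_d, psd A -> \tr (E A) = \tr A.

Definition vsum (d : nat) (s : seq 'cV[C]_d) : 'cV[C]_d := \sum_(v <- s) v.

(* u \in supp rho : u lies in the span of the eigenvectors of rho with
   nonzero eigenvalues (a span vector is a finite sum of such
   eigenvectors, scalars being absorbed into the eigenvectors) *)
Definition eigvec_nz (d : nat) (rho : 'M[C]_d) (v : 'cV[C]_d) : Prop :=
  exists2 a : C, a != 0 & rho *m v = a *: v.

Definition in_supp (d : nat) (rho : 'M[C]_d) (u : 'cV[C]_d) : Prop :=
  exists s : seq 'cV[C]_d, (forall v, v \in s -> eigvec_nz rho v) /\ u = vsum s.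

Definition Fk (d m : nat) (E : 'I_m -> 'M[C]_d -> 'M[C]_d) (M1 : 'M[C]_d)
  (k : 'I_m) (rho : 'M[C]_d) : 'M[C]_d := E k (M1 *m rho *m adj M1).

Definition Fstr (d m : nat) (E : 'I_m -> 'M[C]_d -> 'M[C]_d) (M1 : 'M[C]_d)
  (f : seq 'I_m) (rho : 'M[C]_d) : 'M[C]_d :=
  foldl (fun A k => Fk E M1 k A) rho f.

Definition Fsum (d m : nat) (E : 'I_m -> 'M[C]_d -> 'M[C]_d) (M1 : 'M[C]_d)
  (rho : 'M[C]_d) : 'M[C]_d := \sum_(k < m) Fk E M1 k rho.

(* u \in H_URR = bigcap_n span (union_{|f| >= n} supp F_f(rho0)) *)
Definition in_URR (d m : nat) (E : 'I_m -> 'M[C]_d -> 'M[C]_d) (M1 : 'M[C]_d)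
  (rho0 : 'M[C]_d) (u : 'cV[C]_d) : Prop :=
  forall n : nat,
    exists s : seq (seq 'I_m * 'cV[C]_d),
      (forall p, p \in s -> n <= size p.1 /\ in_supp (Fstr E M1 p.1 rho0) p.2)%N
      /\ u = vsum (map snd s).

End QDefs.

(* Main.v *)
Require Import Defs.
From HB Require Import structures.
From mathcomp Require Import all_boot all_order all_algebra.
From mathcomp Require Import sesquilinear spectral ring zify.
Set Implicit Arguments. Unset Strict Implicit. Unset Printing Implicit Defensive.
Import Order.TTheory GRing.Theory Num.Theory.
Local Open Scope ring_scope.

Section Aux.
Variable C : numClosedFieldType.
Variable d : nat.
Local Notation M := ('M[C]_d).
Local Notation V := ('cV[C]_d).

Lemma adj_mul m n p (A : 'M[C]_(m, n)) (B : 'M[C]_(n, p)) :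
  adj (A *m B) = adj B *m adj A.
Proof. by rewrite /adj map_mxM trmx_mul. Qed.

Lemma adjK m n (A : 'M[C]_(m, n)) : adj (adj A) = A.
Proof. by apply/matrixP => i j; rewrite !mxE conjCK. Qed.

Lemma adjD m n (A B : 'M[C]_(m, n)) : adj (A + B) = adj A + adj B.
Proof. by apply/matrixP => i j; rewrite !mxE rmorphD. Qed.

Lemma adjZ m n a (A : 'M[C]_(m, n)) : adj (a *: A) = a^* *: adj A.
Proof. by apply/matrixP => i j; rewrite !mxE rmorphM. Qed.

Lemma adjN m n (A : 'M[C]_(m, n)) : adj (- A) = - adj A.
Proof. by apply/matrixP => i j; rewrite !mxE rmorphN. Qed.

Lemma adj0 m n : adj (0 : 'M[C]_(m, n)) = 0.
Proof. by apply/matrixP => i j; rewrite !mxE rmorph0. Qed.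

Lemma adjE m n (A : 'M[C]_(m, n)) : adj A = (A ^t*)%sesqui.
Proof. by rewrite /adj map_trmx. Qed.

Definition bf (A : M) (u v : V) : C := (adj u *m A *m v) 0 0.

Lemma bfDl A u v w : bf A (u + v) w = bf A u w + bf A v w.
Proof. by rewrite /bf adjD !mulmxDl mxE. Qed.
Lemma bfDr A u v w : bf A w (u + v) = bf A w u + bf A w v.
Proof. by rewrite /bf !mulmxDr mxE. Qed.
Lemma bfZl A a u w : bf A (a *: u) w = a^* * bf A u w.
Proof. by rewrite /bf adjZ -!scalemxAl mxE. Qed.
Lemma bfZr A a u w : bf A w (a *: u) = a * bf A w u.
Proof. by rewrite /bf -!scalemxAr mxE. Qed.
Lemma bfDm A B u v : bf (A + B) u v = bf A u v + bf B u v.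
Proof. by rewrite /bf mulmxDr mulmxDl mxE. Qed.

Lemma adj_delta (i : 'I_d) : adj (delta_mx i 0 : V) = delta_mx 0 i.
Proof.
apply/matrixP => a b; rewrite !mxE.
by case: (a == 0) (b == i) => [] [] /=; rewrite ?rmorph1 ?rmorph0.
Qed.

Lemma bf_delta A i j : bf A (delta_mx i 0) (delta_mx j 0) = A i j.
Proof. by rewrite /bf adj_delta -rowE -colE !mxE. Qed.

Lemma psd_real A u : psd A -> (bf A u u)^* = bf A u u.
Proof. by move=> /(_ u) h; apply: conj_Creal; apply: ger0_real. Qed.

Lemma conjNi : (- 'i : C)^* = 'i.
Proof. by rewrite raddfN /= conjCi opprK. Qed.

Lemma psd_bf_conj A u v : psd A -> (bf A u v)^* = bf A v u.
Proof.
move=> pA.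
have hp := psd_real u pA; have hr := psd_real v pA.
have key a : a^* * (bf A u v)^* + a * (bf A v u)^* = a * bf A u v + a^* * bf A v u.
  have h := psd_real (u + a *: v) pA.
  rewrite !bfDl !bfDr !bfZl !bfZr in h.
  move: h hp hr; set x := bf A u v; set y := bf A v u.
  set p := bf A u u; set r := bf A v v => h hp hr.
  rewrite !rmorphD !rmorphM /= conjCK hp hr in h.
  move/eqP: h; rewrite -subr_eq0 => /eqP h.
  by apply/eqP; rewrite -subr_eq0 -h; apply/eqP; ring.
have e1 := key 1; rewrite rmorph1 !mul1r in e1.
have e2 := key 'i; rewrite conjCi in e2.
move: e1 e2; set x := bf A u v; set y := bf A v u => e1 e2.
have e3 : x - y + x^* - y^* = 0.
  have : 'i * (x - y + x^* - y^*) = 0.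
    move/eqP: e2; rewrite -subr_eq0 => /eqP h.
    by rewrite -oppr0 -h; ring.
  by move/eqP; rewrite mulf_eq0 (negbTE (neq0Ci _)) /= => /eqP.
have : 2%:R * x^* = 2%:R * y.
  rewrite mulr_natl mulr2n; apply/eqP; rewrite -subr_eq0; apply/eqP.
  have -> : x^* + x^* - 2%:R * y = (x^* + y^*) - (x + y) + (x - y + x^* - y^*).
    by ring.
  by rewrite e1 e3 subrr addr0.
have n2 : (2%:R : C) != 0 by rewrite pnatr_eq0.
by move/(mulfI n2).
Qed.

Lemma psd_adj (A : M) : psd A -> adj A = A.
Proof.
move=> pA; apply/matrixP => i j.
by rewrite !mxE -bf_delta psd_bf_conj // bf_delta.
Qed.

Lemma psd_herm (A : M) : psd A -> A \is hermsymmx.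
Proof.
move=> pA; apply/is_hermitianmxP; rewrite expr0 scale1r.
by rewrite -map_trmx; have := psd_adj pA; rewrite /adj => ->.
Qed.

Lemma adj_herm_mul (A : M) (z : V) : adj A = A -> adj z *m A = adj (A *m z).
Proof. by move=> hA; rewrite adj_mul hA. Qed.

Lemma bf_quad (A : M) (z w : V) t : psd A ->
  bf A (z - t *: w) (z - t *: w) =
  bf A z z - t * (bf A w z)^* - t^* * bf A w z + t^* * t * bf A w w.
Proof.
move=> pA; rewrite -scaleNr !bfDl !bfDr !bfZl !bfZr.
rewrite (psd_bf_conj _ _ pA) rmorphN /=; ring.
Qed.

Lemma psd_CS (A : M) (w z : V) : psd A ->
  bf A w z * (bf A w z)^* <= bf A w w * bf A z z.
Proof.
move=> pA.
have ha : 0 <= bf A w w := pA w.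
have hg : 0 <= bf A z z := pA z.
have ra := psd_real w pA; have rg := psd_real z pA.
move: ha hg ra rg; set a := bf A w w; set b := bf A w z; set g := bf A z z.
move=> ha hg ra rg.
have hN : 0 <= b * b^* := mul_conjC_ge0 b.
have rN : (b * b^*)^* = b * b^*.
  by rewrite rmorphM /= conjCK mulrC.
have [a0|an0] := eqVneq a 0.
  rewrite a0 mul0r.
  have [b0|bn0] := eqVneq b 0; first by rewrite b0 mul0r.
  have Nn0 : b * b^* != 0 by rewrite mul_conjC_eq0.
  pose s := (g + 1) / (b * b^*).
  have hs : s^* = s by rewrite /s rmorphM /= rmorphV ?unitfE //= rN rmorphD /= rg rmorph1.
  have : 0 <= bf A (z - (s * b) *: w) (z - (s * b) *: w) := pA _.
  rewrite bf_quad // -/a -/b -/g a0.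
  rewrite rmorphM /= hs mulr0 addr0.
  have -> : g - s * b * b^* - s * b^* * b = g - 2%:R * (s * (b * b^*)) by ring.
  rewrite /s mulfVK // => h.
  have : g - 2%:R * (g + 1) < 0.
    have -> : g - 2%:R * (g + 1) = - (g + 2%:R) by ring.
    rewrite oppr_lt0; apply: (le_lt_trans hg); rewrite ltrDl; exact: ltr0Sn.
  by move=> hlt; move: (le_lt_trans h hlt); rewrite ltxx.
have apos : 0 < a by rewrite lt_def an0 ha.
have : 0 <= bf A (z - (b / a) *: w) (z - (b / a) *: w) := pA _.
rewrite bf_quad // -/a -/b -/g.
rewrite rmorphM /= rmorphV ?unitfE //= ra => h.
have -> : b * b^* = a * g - a * (g - b / a * b^* - b^* / a * b + b^* / a * (b / a) * a).
  by field.
rewrite gerBl; exact: mulr_ge0.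
Qed.

Lemma psd_ker (A : M) (z : V) : psd A -> bf A z z = 0 -> A *m z = 0.
Proof.
move=> pA h0; apply/matrixP => i j; rewrite ord1 [RHS]mxE.
have e : bf A (delta_mx i 0) z = (A *m z) i 0.
  by rewrite /bf adj_delta -rowE -row_mul mxE.
have := psd_CS (delta_mx i 0) z pA; rewrite h0 mulr0 e => h.
have : (A *m z) i 0 * ((A *m z) i 0)^* = 0.
  by apply/eqP; rewrite eq_le h mul_conjC_ge0.
by move/eqP; rewrite mul_conjC_eq0 => /eqP.
Qed.


Lemma adj_tstar (P : M) : adj (P ^t*)%sesqui = P.
Proof. by rewrite adjE trmxCK. Qed.

Lemma spec (A : M) : A \is hermsymmx ->
  exists (c : 'I_d -> V) (D : 'I_d -> C),
    (forall i, A *m c i = D i *: c i) /\ \sum_i c i *m adj (c i) = 1%:M.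
Proof.
move=> hA.
have /hermitian_normalmx /orthomx_spectralP eA := hA.
move: eA; set P := spectralmx A; set sp := spectral_diag A => eA.
have uP : P \is unitarymx := spectral_unitarymx A.
have PP : P *m (P^t*)%sesqui = 1%:M := unitarymxP uP.
have PP' : (P^t*)%sesqui *m P = 1%:M := mulmx1C PP.
rewrite invmx_unitary // in eA.
exists (fun i => (P^t*)%sesqui *m delta_mx i 0), (fun i => sp 0 i); split.
- move=> i; rewrite {1}eA -!mulmxA (mulmxA P) PP mul1mx mul_diag_mx.
  rewrite scalemxAr; congr (_ *m _); apply/matrixP => k l; rewrite !mxE.
  by case: (eqVneq k i) => [->|_]; rewrite ?mulr1 ?mulr0 ?mulr0n ?mulr1n //=; rewrite !mulr0.
- under eq_bigr => i _ do rewrite adj_mul adj_delta adj_tstar mulmxA -(mulmxA _ (delta_mx i 0)) mul_delta_mx.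
  by rewrite -mulmx_suml -mulmx_sumr -mx1_sum_delta mulmx1 PP'.
Qed.


Definition orthk (A : M) (x : V) := forall z : V, A *m z = 0 -> adj z *m x = 0.

Lemma supp_orth (A : M) x : psd A -> in_supp A x -> orthk A x.
Proof.
move=> pA [s [hs ->]] z hz; rewrite /vsum mulmx_sumr.
apply: big1_seq => v /andP[_ vs].
have [a an0 hv] := hs v vs.
have : adj z *m (A *m v) = 0.
  by rewrite mulmxA adj_herm_mul ?psd_adj // hz adj0 mul0mx.
rewrite hv -scalemxAr => /eqP; rewrite scalemx_eq0 (negbTE an0) /=.
by move/eqP.
Qed.

Lemma orth_supp (A : M) x : psd A -> orthk A x -> in_supp A x.
Proof.
move=> pA ho.
have [c [D [hc h1]]] := spec (psd_herm pA).
pose t i := c i *m (adj (c i) *m x).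
exists (map t (index_enum 'I_d)); split.
  move=> v /mapP [i _ ->].
  have [D0|Dn0] := eqVneq (D i) 0.
    have : A *m c i = 0 by rewrite hc D0 scale0r.
    move/ho => e; exists 1; first exact: oner_neq0.
    by rewrite /t e !mulmx0 scale1r.
  by exists (D i) => //; rewrite /t mulmxA hc scalemxAl.
rewrite /vsum big_map.
have -> : \sum_(i <- index_enum 'I_d) t i = \sum_i t i by [].
by rewrite /t; under eq_bigr => i _ do rewrite mulmxA; rewrite -mulmx_suml h1 mul1mx.
Qed.

Lemma orth_range (A : M) x : psd A -> orthk A x -> exists w, x = A *m w.
Proof.
move=> pA /(orth_supp pA) [s [hs ->]].
elim: s hs => [|v s IH] hs.
  by exists 0; rewrite /vsum big_nil mulmx0.
have [a an0 hv] := hs v (mem_head _ _).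
have [w ew] : exists w, vsum s = A *m w.
  by apply: IH => u us; apply: hs; rewrite in_cons us orbT.
exists (a^-1 *: v + w); rewrite /vsum big_cons -/(vsum s) ew mulmxDr.
by rewrite -scalemxAr hv scalerA mulVf // scale1r.
Qed.

Lemma range_orth (A : M) w : psd A -> orthk A (A *m w).
Proof.
by move=> pA z hz; rewrite mulmxA adj_herm_mul ?psd_adj // hz adj0 mul0mx.
Qed.

Lemma range_supp (A : M) w : psd A -> in_supp A (A *m w).
Proof. by move=> pA; apply: orth_supp => //; apply: range_orth. Qed.


Definition posmap (G : M -> M) := linear_map G /\ (forall X, psd X -> psd (G X)).

Lemma G0 (G : M -> M) : linear_map G -> G 0 = 0.
Proof.
move=> lin; have := lin 1 0 0; rewrite !scale1r addr0 => h.
by apply/esym/(addrI (G 0)); rewrite addr0 -h.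
Qed.

Lemma GD (G : M -> M) (A B : M) : linear_map G -> G (A + B) = G A + G B.
Proof. by move=> lin; have := lin 1 A B; rewrite !scale1r. Qed.

Lemma GZ (G : M -> M) a (A : M) : linear_map G -> G (a *: A) = a *: G A.
Proof. by move=> lin; have := lin a A 0; rewrite (G0 lin) !addr0. Qed.

Lemma GN (G : M -> M) (A : M) : linear_map G -> G (- A) = - G A.
Proof. by move=> lin; rewrite -scaleN1r GZ // scaleN1r. Qed.

Lemma G_sum (G : M -> M) I (r : seq I) (P : pred I) (F : I -> M) : linear_map G ->
  G (\sum_(i <- r | P i) F i) = \sum_(i <- r | P i) G (F i).
Proof.
move=> lin; apply: (big_ind2 (fun x y => G x = y)); first exact: (G0 lin).
  by move=> x1 x2 y1 y2 <- <-; rewrite (GD _ _ lin).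
by [].
Qed.

Lemma bfZm (A : M) a (u v : V) : bf (a *: A) u v = a * bf A u v.
Proof. by rewrite /bf -scalemxAr -scalemxAl mxE. Qed.

Lemma bfNm (A : M) (u v : V) : bf (- A) u v = - bf A u v.
Proof. by rewrite -scaleN1r bfZm mulN1r. Qed.

Lemma bf_sum I (r : seq I) (P : pred I) (F : I -> M) (u v : V) :
  bf (\sum_(i <- r | P i) F i) u v = \sum_(i <- r | P i) bf (F i) u v.
Proof.
apply: (big_morph (fun X => bf X u v)) => [X Y|]; first exact: bfDm.
by rewrite /bf mulmx0 mul0mx mxE.
Qed.

Lemma mx11M (a b : 'M[C]_1) : (a *m b) 0 0 = a 0 0 * b 0 0.
Proof. by rewrite mxE big_ord1. Qed.

Lemma bf_rank1 (c x : V) :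
  bf (c *m adj c) x x = (adj x *m c) 0 0 * ((adj x *m c) 0 0)^*.
Proof.
rewrite /bf !mulmxA -(mulmxA (adj x *m c)) mx11M.
have -> : adj c *m x = adj (adj x *m c) by rewrite adj_mul adjK.
by rewrite [in X in _ * X]mxE [in X in _ * X]mxE.
Qed.

Lemma psd_rank1 (c : V) : psd (c *m adj c).
Proof. by move=> x; rewrite -/(bf _ x x) bf_rank1 mul_conjC_ge0. Qed.

Lemma psdD (A B : M) : psd A -> psd B -> psd (A + B).
Proof. by move=> pA pB x; rewrite -/(bf _ x x) bfDm; apply: addr_ge0; [exact: pA|exact: pB]. Qed.

Lemma psd0 : psd (0 : M).
Proof. by move=> x; rewrite -/(bf _ x x) /bf mulmx0 mul0mx mxE. Qed.

Lemma psd_sum I (r : seq I) (P : pred I) (F : I -> M) :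
  (forall i, P i -> psd (F i)) -> psd (\sum_(i <- r | P i) F i).
Proof.
by move=> h; apply: (big_ind (fun X => psd X)) => //; [exact: psd0|exact: psdD].
Qed.

Lemma key_rank1 (G : M -> M) (B : M) (w z : V) : posmap G -> psd B ->
  G B *m z = 0 -> bf (G ((B *m w) *m adj (B *m w))) z z = 0.
Proof.
move=> [lin pos] pB hz.
set c := B *m w.
have pY : psd (bf B w w *: B - c *m adj c).
  move=> x; rewrite -/(bf _ x x) bfDm bfNm bf_rank1 bfZm subr_ge0.
  have e : (adj x *m c) 0 0 = bf B x w by rewrite /c mulmxA.
  rewrite e [bf B w w * _]mulrC; exact: psd_CS.
have := pos _ pY z; rewrite -/(bf _ z z) GD // GN // GZ // bfDm bfNm bfZm.
have -> : bf (G B) z z = 0 by rewrite /bf -mulmxA hz mulmx0 mxE.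
rewrite mulr0 add0r oppr_ge0 => h.
by apply/eqP; rewrite eq_le h; apply: (pos _ (psd_rank1 c)).
Qed.

Lemma Mlem (G : M -> M) (A B : M) : posmap G -> psd A -> psd B ->
  (forall z : V, B *m z = 0 -> A *m z = 0) ->
  forall z : V, G B *m z = 0 -> G A *m z = 0.
Proof.
move=> [lin pos] pA pB hAB z hz.
apply: psd_ker; first exact: pos.
have [c [D [hc h1]]] := spec (psd_herm pA).
have eA : A = \sum_i D i *: (c i *m adj (c i)).
  rewrite -[A]mulmx1 -h1 mulmx_sumr; apply: eq_bigr => i _.
  by rewrite mulmxA hc scalemxAl.
rewrite eA G_sum // bf_sum; apply: big1 => i _.
rewrite GZ // bfZm.
have [D0|Dn0] := eqVneq (D i) 0; first by rewrite D0 mul0r.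
have ho : orthk B (c i).
  move=> z' hz'.
  have : adj z' *m (A *m c i) = 0.
    by rewrite mulmxA adj_herm_mul ?psd_adj // hAB // adj0 mul0mx.
  rewrite hc -scalemxAr => /eqP; rewrite scalemx_eq0 (negbTE Dn0) /=.
  by move/eqP.
have [w ->] := orth_range pB ho.
by rewrite key_rank1 ?mulr0.
Qed.


Lemma Kadd (A B : M) (z : V) : psd A -> psd B ->
  (A + B) *m z = 0 <-> A *m z = 0 /\ B *m z = 0.
Proof.
move=> pA pB; split; last by case=> h1 h2; rewrite mulmxDl h1 h2 addr0.
move=> h.
have e : bf A z z + bf B z z = 0.
  by rewrite -bfDm /bf -mulmxA h mulmx0 mxE.
move/eqP: e; rewrite paddr_eq0; try by [apply: pA|apply: pB].
by case/andP=> /eqP/(psd_ker pA) -> /eqP/(psd_ker pB) ->.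
Qed.

Lemma Ksum (I : eqType) (r : seq I) (F : I -> M) (z : V) :
  (forall i, psd (F i)) ->
  (\sum_(i <- r) F i) *m z = 0 <-> (forall i, i \in r -> F i *m z = 0).
Proof.
move=> pF; elim: r => [|a r IH].
  by rewrite big_nil mul0mx; split.
rewrite big_cons Kadd //; last exact: psd_sum.
rewrite IH; split.
  by case=> h1 h2 i; rewrite in_cons => /orP[/eqP ->|]; [exact: h1|exact: h2].
move=> h; split; first by apply: h; rewrite mem_head.
by move=> i ir; apply: h; rewrite in_cons ir orbT.
Qed.

Lemma Ksum_ord k (F : nat -> M) (z : V) :
  (forall i, psd (F i)) ->
  (\sum_(i < k) F i) *m z = 0 <-> (forall i, (i < k)%N -> F i *m z = 0).
Proof.
move=> pF; rewrite -(big_mkord xpredT F) /index_iota subn0 Ksum //.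
by split=> h i; [move=> ik; apply: h; rewrite mem_iota|rewrite mem_iota => /andP[_]; apply: h].
Qed.

Definition Ksub (X Y : M) := forall z : V, X *m z = 0 -> Y *m z = 0.

Lemma Ksub_mx (X Y : M) : Ksub X Y -> (kermx X^T <= kermx Y^T)%MS.
Proof.
move=> h; apply/row_subP => i.
have /sub_kermxP e : (row i (kermx X^T) <= kermx X^T)%MS := row_sub i _.
apply/sub_kermxP.
have : X *m (row i (kermx X^T))^T = 0 by move: (congr1 trmx e); rewrite trmx_mul trmxK trmx0.
move/h => h2.
by move: (congr1 trmx h2); rewrite trmx_mul trmxK trmx0.
Qed.

Lemma mx_Ksub (X Y : M) : (kermx X^T <= kermx Y^T)%MS -> Ksub X Y.
Proof.
move=> h z hz.
have : (z^T <= kermx X^T)%MS by apply/sub_kermxP; rewrite -trmx_mul hz trmx0.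
move=> /submx_trans /(_ h) /sub_kermxP e.
by rewrite -[_ *m _]trmxK trmx_mul e trmx0.
Qed.

Lemma RK1 (X Y : M) : Ksub X Y -> (\rank Y <= \rank X)%N.
Proof.
move=> /Ksub_mx /mxrankS; rewrite !mxrank_ker !mxrank_tr.
have := rank_leq_row X; have := rank_leq_row Y; lia.
Qed.

Lemma RK2 (X Y : M) : Ksub X Y -> (\rank X <= \rank Y)%N -> Ksub Y X.
Proof.
move=> h hr; apply: mx_Ksub.
have := (mxrank_leqif_sup (Ksub_mx h)).2.
rewrite !mxrank_ker !mxrank_tr => <-.
have := RK1 h; have := rank_leq_row X; have := rank_leq_row Y.
move=> h1 h2 h3; apply/eqP; lia.
Qed.

End Aux.

Local Close Scope ring_scope.
Lemma G1 (r : nat -> nat) d : (forall k, r k <= d)%N -> (forall k, r k <= r k.+1)%N ->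
  (forall k, r k.+1 <= r k -> r k.+2 <= r k.+1)%N -> (r 0 = 0 -> r 1 <= r 0)%N ->
  forall j, (d.-1 <= j)%N -> r j = r d.-1.
Proof.
move=> hb hm hs h0.
have stab i : (r i.+1 <= r i)%N -> forall j, (i <= j)%N -> (r j.+1 <= r j)%N.
  move=> hi j /subnK <-; elim: (j - i)%N => [|k IH] //=.
  by rewrite addSn; apply: hs.
have ex : exists i, (i <= d.-1)%N /\ (r i.+1 <= r i)%N.
  have H k : (exists i, (i <= k)%N /\ (r i.+1 <= r i)%N) \/ (r 0 + k.+1 <= r k.+1)%N.
    elim: k => [|k IH].
      case: (leqP (r 1) (r 0)) => h; first by left; exists 0.
      by right; lia.
    case: IH => [[i [hi hr]]|hk]; first by left; exists i; split=> //; lia.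
    case: (leqP (r k.+2) (r k.+1)) => h; first by left; exists k.+1.
    by right; lia.
  case: (H d.-1) => // hd; exists 0; split => //.
  apply: h0; have := hb d.-1.+1; lia.
have [i [hi hri]] := ex.
move=> j hj; elim: j hj => [|j IH] hj.
  by have -> : d.-1 = 0 by lia.
case: (ltngtP j.+1 d.-1) => [h|h|<-] //; first by lia.
have hij : (i <= j)%N by lia.
have := stab i hri j hij.
have := hm j; move=> h1 h2; rewrite -IH; last by lia.
by apply/eqP; rewrite eqn_leq h1 h2.
Qed.


Lemma G2 (s : nat -> nat) d : (forall k, s k <= d)%N -> (forall k, s k.+1 <= s k)%N ->
  (forall k, s k <= s k.+1 -> s k.+1 <= s k.+2)%N ->
  forall j, (d <= j)%N -> s j = s d.
Proof.
move=> hb hm hs.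
have stab i : (s i <= s i.+1)%N -> forall j, (i <= j)%N -> (s j <= s j.+1)%N.
  move=> hi j /subnK <-; elim: (j - i)%N => [|k IH] //=.
  by rewrite addSn; apply: hs.
have H k : (exists i, (i <= k)%N /\ (s i <= s i.+1)%N) \/ (s k.+1 + k.+1 <= s 0)%N.
  elim: k => [|k IH].
    case: (leqP (s 0) (s 1)) => h; first by left; exists 0.
    by right; lia.
  case: IH => [[i [hi hr]]|hk]; first by left; exists i; split=> //; lia.
  case: (leqP (s k.+1) (s k.+2)) => h; first by left; exists k.+1.
  by right; lia.
move=> j; elim: j => [|j IH] hj.
  by have -> : d = 0 by lia.
case: (ltngtP j.+1 d) => [h|h|<-] //; first by lia.
have hjd : (d <= j)%N by lia.
rewrite -(IH hjd); apply/eqP; rewrite eqn_leq hm /=.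
case: d hb hjd H {IH h hj} => [|d] hb hjd H.
  by have := hb j.+1; have := hb j; lia.
case: (H d) => [[i [hi hr]]|hk].
  apply: (stab i hr); lia.
have hsd : s d.+1 = 0.
  have h0 := hb 0; lia.
have : (s j <= s d.+1)%N.
  move: hjd; rewrite leq_eqVlt => /orP[/eqP ->//|].
  move=> lt; elim: j lt => [//|j IHj] lt.
  rewrite leq_eqVlt in lt; case/orP: lt => [/eqP [] ->//|lt].
  by apply: leq_trans (hm j) (IHj lt).
lia.
Qed.
Local Open Scope ring_scope.

Section Prog.
Variable C : numClosedFieldType.
Variables d m : nat.
Variable E : 'I_m -> 'M[C]_d -> 'M[C]_d.
Variable M1 : 'M[C]_d.
Hypothesis linE : forall k, linear_map (E k).
Hypothesis posE : forall k X, psd X -> psd (E k X).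
Local Notation M := ('M[C]_d).
Local Notation V := ('cV[C]_d).
Local Notation F := (Fsum E M1).

Lemma lin_comp (g h : M -> M) : linear_map g -> linear_map h -> linear_map (h \o g).
Proof. by move=> lg lh a A B /=; rewrite lg lh. Qed.

Lemma Fk_lin k : linear_map (Fk E M1 k).
Proof.
move=> a A B; rewrite /Fk mulmxDr mulmxDl -scalemxAr -scalemxAl.
exact: linE.
Qed.

Lemma psd_conj (X : M) : psd X -> psd (M1 *m X *m adj M1).
Proof.
move=> pX u; have := pX (adj M1 *m u).
by rewrite adj_mul adjK !mulmxA.
Qed.

Lemma Fk_psd k X : psd X -> psd (Fk E M1 k X).
Proof. by move=> pX; apply: posE; apply: psd_conj. Qed.

Lemma F_lin : linear_map F.
Proof.
move=> a A B; rewrite /Fsum scaler_sumr -big_split /=.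
by apply: eq_bigr => k _; rewrite Fk_lin.
Qed.

Lemma F_psd X : psd X -> psd (F X).
Proof. by move=> pX; apply: psd_sum => k _; apply: Fk_psd. Qed.

Lemma F_pos : posmap F.
Proof. by split; [exact: F_lin|exact: F_psd]. Qed.

Lemma Fstr_lin f : linear_map (Fstr E M1 f).
Proof.
elim: f => [|k f IH] /=; first by move=> a A B.
have -> : Fstr E M1 (k :: f) = Fstr E M1 f \o Fk E M1 k by [].
by apply: lin_comp => //; apply: Fk_lin.
Qed.

Lemma Fstr_psd f X : psd X -> psd (Fstr E M1 f X).
Proof.
elim: f X => [|k f IH] X pX //=.
by apply: IH; apply: Fk_psd.
Qed.

Lemma iter_psd i X : psd X -> psd (iter i F X).
Proof. by elim: i => [|i IH] //= pX; apply: F_psd; apply: IH. Qed.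

Lemma EXP j (rho : M) (z : V) : psd rho ->
  iter j F rho *m z = 0 <-> (forall f, size f = j -> Fstr E M1 f rho *m z = 0).
Proof.
elim: j rho => [|j IH] rho prho.
  by split => [h [|k f] //|h]; apply: (h [::]).
rewrite iterSr IH; last exact: F_psd.
have e f : Fstr E M1 f (F rho) = \sum_(k < m) Fstr E M1 f (Fk E M1 k rho).
  by rewrite /Fsum G_sum //; apply: Fstr_lin.
split.
  move=> h [|k f] //= [sf].
  have := h f sf; rewrite e Ksum; last by move=> i; apply: Fstr_psd; apply: Fk_psd.
  by move/(_ k (mem_index_enum _)).
move=> h f sf; rewrite e Ksum; last by move=> i; apply: Fstr_psd; apply: Fk_psd.
by move=> k _; apply: (h (k :: f)); rewrite /= sf.
Qed.

Variable rho0 : M.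
Hypothesis prho : psd rho0.
Hypothesis dpos : (0 < d)%N.

Definition T i := iter i F rho0.
Definition R n k := \sum_(i < k) T (n + i).

Lemma T_psd i : psd (T i).
Proof. exact: iter_psd. Qed.

Lemma R_psd n k : psd (R n k).
Proof. by apply: psd_sum => i _; apply: T_psd. Qed.

Lemma KR n k (z : V) : R n k *m z = 0 <-> (forall i, (i < k)%N -> T (n + i) *m z = 0).
Proof. by apply: Ksum_ord => i; apply: T_psd. Qed.

Lemma F_R n k : F (R n k) = R n.+1 k.
Proof.
rewrite /R G_sum; last exact: F_lin.
by apply: eq_bigr => i _; rewrite /T addSn.
Qed.

Lemma R_succ n k : R n k.+1 = T n + F (R n k).
Proof.
rewrite F_R /R big_ord_recl addn0; congr (_ + _).
by apply: eq_bigr => i _; rewrite addSnnS.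
Qed.

Lemma Ksub_F (X Y : M) : psd X -> psd Y -> Ksub X Y -> Ksub (F X) (F Y).
Proof. by move=> pX pY h; apply: (Mlem F_pos pY pX h). Qed.

Lemma Ksub_R n k k' : (k' <= k)%N -> Ksub (R n k) (R n k').
Proof.
move=> hk z /KR h; apply/KR => i hi; apply: h; exact: leq_trans hi hk.
Qed.

Lemma W2 n j : (n <= j)%N -> Ksub (R n d) (T j).
Proof.
pose U k := R n k.+1.
pose r k := \rank (U k).
have hb k : (r k <= d)%N by apply: rank_leq_row.
have hm k : (r k <= r k.+1)%N by apply: RK1; apply: Ksub_R.
have hs k : (r k.+1 <= r k -> r k.+2 <= r k.+1)%N.
  move=> hr; have h1 := RK2 (Ksub_R (n:=n) (leqnSn k.+1)) hr.
  have h2 := Ksub_F (R_psd _ _) (R_psd _ _) h1.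
  apply: RK1 => z; rewrite /U => hz.
  have ps1 := T_psd n; have ps2 := F_psd (R_psd n k.+1); have ps3 := F_psd (R_psd n k.+2).
  move: hz; rewrite R_succ Kadd // => -[h3 h4].
  by rewrite R_succ Kadd //; split => //; apply: h2.
have h0 : (r 0 = 0 -> r 1 <= r 0)%N.
  move=> /eqP; rewrite mxrank_eq0 /U => /eqP e.
  rewrite /r /U R_succ e (G0 F_lin) addr0.
  move: e; rewrite /R big_ord1 addn0 => ->; by [].
have hc := G1 hb hm hs h0.
move=> hnj.
pose k := maxn d.-1 (j - n).
have hK : Ksub (U k) (T j).
  move=> z /KR h; have := h (j - n)%N; rewrite subnKC //; apply.
  by rewrite ltnS leq_maxr.
have e : R n d = U d.-1 by rewrite /U prednK.
rewrite e => z hz; apply: hK.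
have hkd : (d.-1 <= k)%N by rewrite leq_maxl.
apply: (RK2 (Ksub_R (n:=n) _)) hz; first by rewrite ltnS.
by rewrite -/(r k) -/(r d.-1) (hc k hkd).
Qed.

Lemma W1 N : (d <= N)%N -> Ksub (R N d) (R d d).
Proof.
pose s n := \rank (R n d).
have ha n : Ksub (R n d) (R n.+1 d).
  move=> z hz; apply/KR => i hi; apply: (W2 _ hz).
  by rewrite addSn ltnW // ltnS leq_addr.
have hb k : (s k <= d)%N by apply: rank_leq_row.
have hm k : (s k.+1 <= s k)%N by apply: RK1; apply: ha.
have hs k : (s k <= s k.+1 -> s k.+1 <= s k.+2)%N.
  move=> hr; have h1 := RK2 (ha k) hr.
  have h2 := Ksub_F (R_psd _ _) (R_psd _ _) h1.
  by apply: RK1; rewrite (F_R k.+1) (F_R k) in h2.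
have hc := G2 hb hm hs.
move=> hN; apply: RK2.
  move=> z hz; apply/KR => i hi; apply: (W2 _ hz); exact: leq_trans hN (leq_addr _ _).
by rewrite -/(s N) -/(s d) (hc N hN).
Qed.

Fixpoint strs (j : nat) : seq (seq 'I_m) :=
  if j is j'.+1 then [seq k :: f | k <- enum 'I_m, f <- strs j'] else [:: [::]].

Lemma strs_size j f : f \in strs j -> size f = j.
Proof.
elim: j f => [|j IH] f /=; first by rewrite inE => /eqP ->.
by case/allpairsP => -[k g] /= [_ gs ->] /=; rewrite (IH g gs).
Qed.

Lemma size_strs f : f \in strs (size f).
Proof.
elim: f => [|k f IH] /=; first exact: mem_head.
by apply/allpairsP; exists (k, f); rewrite /= mem_enum.
Qed.

Theorem main_equiv (u : V) : in_URR E M1 rho0 u <-> in_supp (R d d) u.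
Proof.
split.
  move=> h; have [s [hs ->]] := h d.
  apply: orth_supp; first exact: R_psd.
  move=> z hz; rewrite /vsum mulmx_sumr big_map; apply: big1_seq => p /andP[_ ps].
  have [hsz hsupp] := hs p ps.
  apply: (supp_orth (Fstr_psd p.1 prho) hsupp).
  by apply: ((EXP (size p.1) z prho).1 (W2 hsz hz)).
move=> h n.
have ho := supp_orth (R_psd d d) h.
pose N := (n + d)%N.
pose L := [seq f | i <- iota 0 d, f <- strs (N + i)].
pose Y := \sum_(f <- L) Fstr E M1 f rho0.
have pY : psd Y by apply: psd_sum => f _; apply: Fstr_psd.
have KY : Ksub Y (R d d).
  move=> z hz.
  have hz' := (Ksum L z (fun f => Fstr_psd f prho)).1 hz.
  apply: (W1 (leq_addl n d)).
  apply/KR => i hi; apply/(EXP _ _ prho) => f sf; apply: hz'.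
  apply/allpairsPdep; exists i, f; split => //; first by rewrite mem_iota.
  by rewrite -sf size_strs.
have oY : orthk Y u by move=> z hz; apply: ho; apply: KY.
have [w ew] := orth_range pY oY.
exists (map (fun f => (f, Fstr E M1 f rho0 *m w)) L); split.
  move=> p /mapP [f fL ->] /=; split; last by apply: range_supp; apply: Fstr_psd.
  move/allpairsPdep: fL => [i [g [_ gs ->]]].
  by rewrite (strs_size gs) /N -addnA leq_addr.
by rewrite ew /Y mulmx_suml /vsum -map_comp big_map.
Qed.

End Prog.

Lemma sum_shift (C : numClosedFieldType) k (G : nat -> 'M[C]_k) n :
  \sum_(n <= i < n + n) G i = \sum_(i < n) G (n + i)%N.
Proof.
rewrite -{1}(add0n n) big_addn addnK big_mkord.
by apply: eq_bigr => i _; rewrite addnC.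
Qed.

Unset Implicit Arguments.

Theorem mainTheorem3 (C : numClosedFieldType) (d m : nat)
  (E : 'I_m -> 'M[C]_d -> 'M[C]_d) (M0 M1 : 'M[C]_d) (rho0 : 'M[C]_d) :
  (0 < d)%N ->
  (forall k, superop (E k) /\ trace_preserving (E k)) ->
  adj M0 *m M0 + adj M1 *m M1 = 1%:M ->
  density rho0 ->
  forall u : 'cV[C]_d,
    in_URR E M1 rho0 u <->
    in_supp (\sum_(d <= i < 2 * d) iter i (Fsum E M1) rho0) u.
Proof.
move=> dpos hE _ [prho _] u.
have linE k : linear_map (E k) by case: (hE k) => -[].
have posE k X : psd X -> psd (E k X).
  move=> pX; case: (hE k) => -[_ cp _] _ v.
  have hb : block_psd (fun (_ _ : 'I_1) => X).
    by move=> w; rewrite !big_ord1; apply: pX.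
  have := cp 1%N _ hb (fun _ => v); rewrite !big_ord1; exact.
have -> : \sum_(d <= i < 2 * d) iter i (Fsum E M1) rho0 = R E M1 rho0 d d.
  by rewrite mul2n -addnn sum_shift.
exact: (main_equiv M1 linE posE prho dpos u).
Qed.
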